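(* If $p$ is a linear groupoid term containing variables of all four colors $\alpha,\beta,\gamma,1$, then there is a term $q$ such that $p=q$ belongs to $\Sigma$ and $q$ has a subterm of the form $((xy)v)(zt)$ or $(u(yx))(zt)$, where $x,y,z,t,u$ are variables and $v$ is a term.
   Context: $\Sigma$ is the set of groupoid identities satisfied by each of the four operations $x+y$, $x-y$, $-x+y$, $-x-y$ in every abelian group. A term is linear if no variable occurs in it more than once. Let $\mathbf{KL}=\{1,\alpha,\beta,\gamma\}$ be the Klein 4-group ($\alpha^2=\beta^2=1$, $\alpha\beta=\gamma$). The color of a variable occurrence in a term is the element of $\mathbf{KL}$ obtained by following the path from the whole term down to that occurrence, starting with $1$ and multiplying by $\alpha$ each time one passes to the left factor of a product and by $\beta$ each time one passes to the right factor. *)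

(* Defs.v *)
From HB Require Import structures.
From mathcomp Require Import all_boot all_algebra.
Set Implicit Arguments. Unset Strict Implicit. Unset Printing Implicit Defensive.
Import GRing.Theory.
Local Open Scope ring_scope.

Inductive term : Type :=
| Var : nat -> term
| Mul : term -> term -> term.

Fixpoint vars (t : term) : seq nat :=
  match t with
  | Var n => [:: n]
  | Mul a b => vars a ++ vars b
  end.

Definition linear_term (t : term) : bool := uniq (vars t).

Fixpoint eval_term (G : Type) (op : G -> G -> G) (e : nat -> G) (t : term) : G :=
  match t with
  | Var n => e n
  | Mul a b => op (eval_term op e a) (eval_term op e b)
  end.

Definition op1 (G : zmodType) (x y : G) : G := x + y.
Definition op2 (G : zmodType) (x y : G) : G := x - y.
Definition op3 (G : zmodType) (x y : G) : G := - x + y.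
Definition op4 (G : zmodType) (x y : G) : G := - x - y.

Definition holds_in (G : Type) (op : G -> G -> G) (p q : term) : Prop :=
  forall e : nat -> G, eval_term op e p = eval_term op e q.

Definition Sigma (p q : term) : Prop :=
  forall G : zmodType,
    holds_in (@op1 G) p q /\ holds_in (@op2 G) p q /\
    holds_in (@op3 G) p q /\ holds_in (@op4 G) p q.

Inductive KL : Type := K1 | Kalpha | Kbeta | Kgamma.
Scheme Equality for KL.
HB.instance Definition _ := hasDecEq.Build KL (fun x y => iffP idP (@internal_KL_dec_bl x y) (@internal_KL_dec_lb x y)).

Definition KLmul (a b : KL) : KL :=
  match a, b with
  | K1, x | x, K1 => x
  | Kalpha, Kalpha | Kbeta, Kbeta | Kgamma, Kgamma => K1
  | Kalpha, Kbeta | Kbeta, Kalpha => Kgamma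
  | Kalpha, Kgamma | Kgamma, Kalpha => Kbeta
  | Kbeta, Kgamma | Kgamma, Kbeta => Kalpha
  end.

(* Colored variable occurrences: the color is obtained along the path from the
   root, starting with 1, multiplying by alpha when passing to a left factor
   and by beta when passing to a right factor. *)
Fixpoint colored_occ (c : KL) (t : term) : seq (nat * KL) :=
  match t with
  | Var n => [:: (n, c)]
  | Mul a b => colored_occ (KLmul c Kalpha) a ++ colored_occ (KLmul c Kbeta) b
  end.

Definition has_color (t : term) (k : KL) : Prop :=
  exists n, (n, k) \in colored_occ K1 t.

Inductive subterm : term -> term -> Prop :=
| sub_refl t : subterm t t
| sub_l s a b : subterm s a -> subterm s (Mul a b)
| sub_r s a b : subterm s b -> subterm s (Mul a b).

(* Main.v *)
Require Import Defs.
From mathcomp Require Import all_boot all_algebra.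
From mathcomp Require Import zify.
Set Implicit Arguments. Unset Strict Implicit. Unset Printing Implicit Defensive.

Fixpoint icnt (c : KL) (t : term) (d : KL) : nat :=
  match t with
  | Var _ => 0
  | Mul a b => (c == d) + icnt (KLmul c Kalpha) a d + icnt (KLmul c Kbeta) b d
  end.
Definition lcnt (c : KL) (t : term) (d : KL) : nat :=
  count (fun x : nat * KL => x.2 == d) (colored_occ c t).

Lemma KLswap (c d k : KL) : k = Kalpha \/ k = Kbeta ->
  (KLmul c k == d) = (c == KLmul d k).
Proof. by case=> ->; case: c; case: d. Qed.

Lemma ident c t d :
  lcnt c t d + icnt c t d = (c == d) + icnt c t (KLmul d Kalpha) + icnt c t (KLmul d Kbeta).
Proof.
elim: t c => [n|a IHa b IHb] c /=.
  by rewrite /lcnt /= addn0 !addn0.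
rewrite /lcnt /= count_cat -/(lcnt _ a d) -/(lcnt _ b d).
have Ea := IHa (KLmul c Kalpha). have Eb := IHb (KLmul c Kbeta).
rewrite (KLswap c d (or_introl erefl)) in Ea.
rewrite (KLswap c d (or_intror erefl)) in Eb.
lia.
Qed.

Lemma graft c t d g : 0 < lcnt c t d ->
  exists t', subterm g t' /\ forall e, icnt c t' e = icnt c t e + icnt d g e.
Proof.
elim: t c => [n|a IHa b IHb] c /=.
  rewrite /lcnt /= addn0 lt0b => /eqP ->.
  by exists g; split; [constructor|].
rewrite /lcnt /= count_cat -/(lcnt _ a d) -/(lcnt _ b d).
case: (posnP (lcnt (KLmul c Kalpha) a d)) => [Ha|Ha] H.
  have [b' [Hs He]] := IHb (KLmul c Kbeta) ltac:(rewrite Ha in H; exact H).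
  exists (Mul a b'); split; first by apply: sub_r.
  move=> e /=; rewrite He; lia.
have [a' [Hs He]] := IHa (KLmul c Kalpha) Ha.
exists (Mul a' b); split; first by apply: sub_l.
move=> e /=; rewrite He; lia.
Qed.

Definition cond4 (a b c g : nat) : Prop :=
  a <= 1 + b + c /\ b <= a + g /\ c <= a + g /\ g <= b + c /\ (a = 0 -> b + c + g = 0).
Lemma pick (a b c g : nat) : cond4 a b c g -> 0 < a + b + c + g ->
  (1 <= a /\ cond4 (a-1) b c g) \/ (1 <= b /\ cond4 a (b-1) c g) \/
  (1 <= c /\ cond4 a b (c-1) g) \/ (1 <= g /\ cond4 a b c (g-1)).
Proof. unfold cond4. lia. Qed.

Definition condv (v : KL -> nat) := cond4 (v K1) (v Kalpha) (v Kbeta) (v Kgamma).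

Lemma cond_at v d : condv v -> v d <= (K1 == d) + v (KLmul d Kalpha) + v (KLmul d Kbeta).
Proof. rewrite /condv /cond4; case: d => /=; lia. Qed.

Definition decv (v : KL -> nat) d := fun e => if e == d then v e - 1 else v e.

Lemma step v d : 1 <= v d -> v d <= (K1 == d) + v (KLmul d Kalpha) + v (KLmul d Kbeta) ->
  (exists s, forall e, icnt K1 s e = decv v d e) -> exists s, forall e, icnt K1 s e = v e.
Proof.
move=> H1 H2 [s Hs].
have Hl := ident K1 s d.
rewrite !Hs /decv eqxx in Hl.
have Ha : (KLmul d Kalpha == d) = false by clear; case: d.
have Hb : (KLmul d Kbeta == d) = false by clear; case: d.
rewrite Ha Hb in Hl.
have [s' [_ He]] := @graft K1 s d (Mul (Var 0) (Var 0)) ltac:(lia).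
exists s' => e; rewrite He Hs /decv /=.
case: (eqVneq e d) => [->|ne] /=; lia.
Qed.

Lemma build n : forall v, v K1 + v Kalpha + v Kbeta + v Kgamma = n -> condv v ->
  exists s, forall e, icnt K1 s e = v e.
Proof.
elim: n => [|n IH] v Hn Hc.
  exists (Var 0) => e /=; case: e; lia.
have := pick Hc ltac:(lia).
case=> [[H1 H2]|[[H1 H2]|[[H1 H2]|[H1 H2]]]].
- apply: (step (d := K1)) => //; first exact: cond_at.
  apply: IH; rewrite /decv /=; lia || done.
- apply: (step (d := Kalpha)) => //; first exact: cond_at.
  apply: IH; rewrite /decv /=; lia || done.
- apply: (step (d := Kbeta)) => //; first exact: cond_at.
  apply: IH; rewrite /decv /=; lia || done.
- apply: (step (d := Kgamma)) => //; first exact: cond_at.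
  apply: IH; rewrite /decv /=; lia || done.
Qed.

Fixpoint shape t := match t with Var _ => Var 0 | Mul a b => Mul (shape a) (shape b) end.

Lemma split_ls (u w : seq KL) (ls : seq (nat * KL)) : perm_eq (u ++ w) (map snd ls) ->
  exists ls1 ls2, perm_eq ls (ls1 ++ ls2) /\ perm_eq u (map snd ls1) /\ perm_eq w (map snd ls2).
Proof.
elim: u ls => [|k u IH] ls /= H.
  by exists [::], ls; rewrite perm_refl.
have : k \in map snd ls by rewrite -(perm_mem H) inE eqxx.
case/mapP => x xin Ek.
have Hp := perm_to_rem xin.
have H' : perm_eq (u ++ w) (map snd (rem x ls)).
  rewrite -(perm_cons k); apply: (perm_trans H); rewrite Ek.
  by have := perm_map snd Hp.
have [ls1 [ls2 [P1 [P2 P3]]]] := IH _ H'.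
exists (x :: ls1), ls2; split; last split => //.
  by apply: (perm_trans Hp); rewrite cat_cons perm_cons.
by rewrite /= Ek perm_cons.
Qed.

Lemma relabel s : forall c ls, perm_eq (map snd (colored_occ c s)) (map snd ls) ->
  exists q, shape q = shape s /\ perm_eq (colored_occ c q) ls.
Proof.
elim: s => [n|a IHa b IHb] c ls /= H.
  have Hs := perm_size H; rewrite size_map in Hs.
  case: ls Hs H => [|x [|]] //= _ H.
  have := perm_mem H c; rewrite !inE eqxx => /esym/eqP Ec.
  case: x Ec H => m k /= Ec H.
  by exists (Var m); rewrite Ec.
rewrite map_cat in H.
have [ls1 [ls2 [P1 [P2 P3]]]] := split_ls H.
have [qa [Sa Pa]] := IHa _ _ P2.
have [qb [Sb Pb]] := IHb _ _ P3.
exists (Mul qa qb); rewrite /= Sa Sb; split => //.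
by apply: (perm_trans (perm_cat Pa Pb)); rewrite perm_sym.
Qed.

Lemma sub_shape P t : subterm P t -> forall q, shape q = shape t ->
  exists P', subterm P' q /\ shape P' = shape P.
Proof.
elim=> {P t} [t|s a b _ IH|s a b _ IH] q Hq.
- by exists q; split; [constructor|].
- case: q Hq => // qa qb [Ha Hb]; have [P' [H1 H2]] := IH _ Ha.
  by exists P'; split => //; apply: sub_l.
- case: q Hq => // qa qb [Ha Hb]; have [P' [H1 H2]] := IH _ Hb.
  by exists P'; split => //; apply: sub_r.
Qed.

Import GRing.Theory.
Local Open Scope ring_scope.
Definition sgn (G : zmodType) (b : bool) (x : G) : G := if b then - x else x.

Lemma eval_sum (G : zmodType) (op : G -> G -> G) (neg : KL -> bool)
  (Hop : forall c x y, sgn (neg (KLmul c Kalpha)) x + sgn (neg (KLmul c Kbeta)) y = sgn (neg c) (op x y))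
  e t : forall c, \sum_(x <- colored_occ c t) sgn (neg x.2) (e x.1) = sgn (neg c) (eval_term op e t).
Proof.
elim: t => [n|a IHa b IHb] c /=; first by rewrite big_seq1.
by rewrite big_cat /= IHa IHb Hop.
Qed.

Lemma eval_perm (G : zmodType) (op : G -> G -> G) (neg : KL -> bool)
  (Hop : forall c x y, sgn (neg (KLmul c Kalpha)) x + sgn (neg (KLmul c Kbeta)) y = sgn (neg c) (op x y))
  (H1 : neg K1 = false) p q : perm_eq (colored_occ K1 p) (colored_occ K1 q) -> holds_in op p q.
Proof.
move=> Hp e.
have := eval_sum Hop e p K1; have := eval_sum Hop e q K1.
rewrite H1 /= => <- <-; exact: perm_big.
Qed.

Lemma Sigma_perm p q : perm_eq (colored_occ K1 p) (colored_occ K1 q) -> Sigma p q.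
Proof.
move=> Hp G; split; last split; last split.
- apply: (@eval_perm G _ (fun _ => false)) => // c x y.
- apply: (@eval_perm G _ (fun d => (d == Kbeta) || (d == Kgamma))) => // c x y.
  by case: c; rewrite /sgn /op2 /= ?opprB ?opprK // addrC.
- apply: (@eval_perm G _ (fun d => (d == Kalpha) || (d == Kgamma))) => // c x y.
  by case: c; rewrite /sgn /op3 /= ?opprD ?opprK // addrC.
- apply: (@eval_perm G _ (fun d => (d == Kalpha) || (d == Kbeta))) => // c x y.
  by case: c; rewrite /sgn /op4 /= ?opprD ?opprK // addrC.
Qed.

Local Close Scope ring_scope.
Local Open Scope nat_scope.

Lemma lcnt_pos p k : has_color p k -> 0 < lcnt K1 p k.
Proof. by case=> n H; rewrite /lcnt -has_count; apply/hasP; exists (n, k) => //=. Qed.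

Lemma perm_of_lcnt s p : (forall d, lcnt K1 s d = lcnt K1 p d) ->
  perm_eq (map snd (colored_occ K1 s)) (map snd (colored_occ K1 p)).
Proof. by move=> H; apply/allP => x _; apply/eqP; rewrite !count_map; apply: H. Qed.

Lemma assemble (v : KL -> nat) c g : condv v ->
  v c < (K1 == c) + v (KLmul c Kalpha) + v (KLmul c Kbeta) ->
  exists s, subterm g s /\ forall e, icnt K1 s e = v e + icnt c g e.
Proof.
move=> Hc Hlt; have [s0 Hs0] := build (erefl _) Hc.
have Hl := ident K1 s0 c; rewrite !Hs0 in Hl.
have [s [Hsub He]] := @graft K1 s0 c g ltac:(lia).
by exists s; split => // e; rewrite He Hs0.
Qed.

Lemma finish p s g : (forall e, icnt K1 s e = icnt K1 p e) -> subterm g s ->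
  exists q, Sigma p q /\ exists P', subterm P' q /\ shape P' = shape g.
Proof.
move=> He Hsub.
have Hl : forall d, lcnt K1 s d = lcnt K1 p d.
  move=> d; have := ident K1 s d; have := ident K1 p d; rewrite !He; lia.
have [q [Sq Pq]] := relabel (perm_of_lcnt Hl).
exists q; split; first by apply: Sigma_perm; rewrite perm_sym.
exact: sub_shape Hsub q Sq.
Qed.

Lemma via p c g : (forall e, icnt c g e <= icnt K1 p e) ->
  condv (fun e => icnt K1 p e - icnt c g e) ->
  icnt K1 p c - icnt c g c < (K1 == c) + (icnt K1 p (KLmul c Kalpha) - icnt c g (KLmul c Kalpha))
      + (icnt K1 p (KLmul c Kbeta) - icnt c g (KLmul c Kbeta)) ->
  exists q, Sigma p q /\ exists P', subterm P' q /\ shape P' = shape g.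
Proof.
move=> Hle Hc Hlt.
have [s [Hsub He]] := @assemble _ c g Hc Hlt.
apply: (finish (s := s)) => // e; rewrite He subnK //.
Qed.

Definition g1 := Mul (Mul (Mul (Var 0) (Var 0)) (Var 0)) (Mul (Var 0) (Var 0)).
Definition g2 := Mul (Mul (Var 0) (Mul (Var 0) (Var 0))) (Mul (Var 0) (Var 0)).

Lemma shape_g1 P : shape P = shape g1 ->
  exists (x y z t : nat) (v : term), P = Mul (Mul (Mul (Var x) (Var y)) v) (Mul (Var z) (Var t)).
Proof.
case: P => [n|A B] //= [EA EB].
case: A EA => [n|A1 v] //= [EA1 _].
case: A1 EA1 => [n|X Y] //= [EX EY].
case: X EX => [x|? ?] // _; case: Y EY => [y|? ?] // _.
case: B EB => [n|Z T] //= [EZ ET].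
case: Z EZ => [z|? ?] // _; case: T ET => [t|? ?] // _.
by exists x, y, z, t, v.
Qed.

Lemma shape_g2 P : shape P = shape g2 ->
  exists (x y z t u : nat), P = Mul (Mul (Var u) (Mul (Var y) (Var x))) (Mul (Var z) (Var t)).
Proof.
case: P => [n|A B] //= [EA EB].
case: A EA => [n|U W] //= [EU EW].
case: U EU => [u|? ?] // _.
case: W EW => [n|Y X] //= [EY EX].
case: X EX => [x|? ?] // _; case: Y EY => [y|? ?] // _.
case: B EB => [n|Z T] //= [EZ ET].
case: Z EZ => [z|? ?] // _; case: T ET => [t|? ?] // _.
by exists x, y, z, t, u.
Qed.

Lemma concl1 p : (exists q, Sigma p q /\ exists P', subterm P' q /\ shape P' = shape g1) ->
  exists q : term, Sigma p q /\
    ((exists (x y z t : nat) (v : term),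
        subterm (Mul (Mul (Mul (Var x) (Var y)) v) (Mul (Var z) (Var t))) q) \/
     (exists (x y z t u : nat),
        subterm (Mul (Mul (Var u) (Mul (Var y) (Var x))) (Mul (Var z) (Var t))) q)).
Proof.
case=> q [S [P' [H1 H2]]]; exists q; split => //; left.
have [x [y [z [t [v E]]]]] := shape_g1 H2; subst P'.
by exists x, y, z, t, v.
Qed.

Lemma concl2 p : (exists q, Sigma p q /\ exists P', subterm P' q /\ shape P' = shape g2) ->
  exists q : term, Sigma p q /\
    ((exists (x y z t : nat) (v : term),
        subterm (Mul (Mul (Mul (Var x) (Var y)) v) (Mul (Var z) (Var t))) q) \/
     (exists (x y z t u : nat),
        subterm (Mul (Mul (Var u) (Mul (Var y) (Var x))) (Mul (Var z) (Var t))) q)).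
Proof.
case=> q [S [P' [H1 H2]]]; exists q; split => //; right.
have [x [y [z [t [u E]]]]] := shape_g2 H2; subst P'.
by exists x, y, z, t, u.
Qed.

Theorem theorem4p2 (p : term) :
  linear_term p ->
  has_color p Kalpha -> has_color p Kbeta -> has_color p Kgamma -> has_color p K1 ->
  exists q : term, Sigma p q /\
    ((exists (x y z t : nat) (v : term),
        subterm (Mul (Mul (Mul (Var x) (Var y)) v) (Mul (Var z) (Var t))) q) \/
     (exists (x y z t u : nat),
        subterm (Mul (Mul (Var u) (Mul (Var y) (Var x))) (Mul (Var z) (Var t))) q)).
Proof.
move=> _ Ha Hb Hg H1.
have La := lcnt_pos Ha; have Lb := lcnt_pos Hb; have Lg := lcnt_pos Hg; have L1 := lcnt_pos H1.
have E1 := ident K1 p K1; have Ea := ident K1 p Kalpha.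
have Eb := ident K1 p Kbeta; have Eg := ident K1 p Kgamma.
simpl in E1, Ea, Eb, Eg.
have Ip : 0 < icnt K1 p K1.
  by move: La; case: p {Ha Hb Hg H1 E1 Ea Eb Eg L1 Lb Lg} => [n|A B] //=; rewrite /lcnt.
case: (posnP (icnt K1 p Kalpha)) => Hb0.
  apply: concl1; apply: (@via p Kbeta g1);
    [case => /=; lia | rewrite /condv /cond4 /=; lia | rewrite /=; lia].
case: (posnP (icnt K1 p Kbeta)) => Hc0.
  apply: concl1; apply: (@via p Kalpha g1);
    [case => /=; lia | rewrite /condv /cond4 /=; lia | rewrite /=; lia].
case: (posnP (icnt K1 p Kgamma)) => Hg0.
  apply: concl1; apply: (@via p K1 g1);
    [case => /=; lia | rewrite /condv /cond4 /=; lia | rewrite /=; lia].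
have [Ha1|Ha1] : (icnt K1 p K1 = 1 /\ 3 < icnt K1 p Kalpha + icnt K1 p Kbeta + icnt K1 p Kgamma)
   \/ (icnt K1 p K1 = 1 -> icnt K1 p Kalpha + icnt K1 p Kbeta + icnt K1 p Kgamma = 3) by lia.
  apply: concl1; apply: (@via p Kgamma g1);
    [case => /=; lia | rewrite /condv /cond4 /=; lia | rewrite /=; lia].
have [C1|[C2|[C3|C4]]] : 2 <= lcnt K1 p K1 \/ 2 <= lcnt K1 p Kalpha \/
   2 <= lcnt K1 p Kbeta \/ 2 <= lcnt K1 p Kgamma by lia.
- apply: concl2; apply: (@via p K1 g2);
    [case => /=; lia | rewrite /condv /cond4 /=; lia | rewrite /=; lia].
- apply: concl2; apply: (@via p Kalpha g2);
    [case => /=; lia | rewrite /condv /cond4 /=; lia | rewrite /=; lia].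
- apply: concl2; apply: (@via p Kbeta g2);
    [case => /=; lia | rewrite /condv /cond4 /=; lia | rewrite /=; lia].
- apply: concl2; apply: (@via p Kgamma g2);
    [case => /=; lia | rewrite /condv /cond4 /=; lia | rewrite /=; lia].
Qed.
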